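(* For every integer $n\geq 2$, $LD(P_2\square P_n)\geq \left\lceil \frac{3n-1}{4}\right\rceil$.
   Context: $P_n$ is the path on $n$ vertices and $\square$ is the Cartesian product of graphs. For a graph $G$, $C\subseteq V(G)$ and $v\in V(G)$ let $I(v)=N[v]\cap C$ ($N[v]$ the closed neighborhood). $C$ is a locating-dominating set if $I(v)\neq\emptyset$ for all $v\in V(G)\setminus C$ and $I(u)\neq I(v)$ for all distinct $u,v\in V(G)\setminus C$. $LD(G)$ is the minimum cardinality of a locating-dominating set of $G$. *)

(* Defs.v *)
From mathcomp Require Import all_boot.
Set Implicit Arguments. Unset Strict Implicit. Unset Printing Implicit Defensive.

Section LD.
Variables (T : finType) (adj : rel T).

Definition closed_nbhd (v : T) : {set T} := [set u | (u == v) || adj v u].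

Definition Iset (C : {set T}) (v : T) : {set T} := closed_nbhd v :&: C.

Definition is_locdom (C : {set T}) : bool :=
  [forall v, (v \notin C) ==> (Iset C v != set0)] &&
  [forall u, forall v, [&& u \notin C, v \notin C & u != v] ==> (Iset C u != Iset C v)].

(* LD(G): minimum cardinality of a locating-dominating set
   (V(G) itself is always one, so #|T| is a valid default). *)
Definition LD : nat := \big[minn/#|T|]_(C : {set T} | is_locdom C) #|C|.
End LD.

Definition cart_adj (A B : finType) (a : rel A) (b : rel B) : rel (A * B) :=
  fun x y => ((x.1 == y.1) && b x.2 y.2) || (a x.1 y.1 && (x.2 == y.2)).

Definition path_adj (n : nat) : rel 'I_n :=
  fun i j => (i.+1 == j :> nat) || (j.+1 == i :> nat).

Arguments path_adj : clear implicits.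
Definition P2Pn_adj (n : nat) : rel ('I_2 * 'I_n) :=
  cart_adj (path_adj 2) (path_adj n).
Arguments P2Pn_adj : clear implicits.

(* Main.v *)
Require Import Defs.
From mathcomp Require Import all_boot zify.
Set Implicit Arguments. Unset Strict Implicit. Unset Printing Implicit Defensive.

Definition cb0 (x : nat) := (x == 3) || (x == 5).
Definition cb1 (x : nat) := (x == 4) || (x == 5).
Definition cp (x : nat) := 2 <= x.
Definition ck (x : nat) := if x == 0 then 0 else if x == 1 then 2 else 1.
Definition Lw (w0 w1 w2 w3 w4 : nat) : bool :=
  [&& (ck w0 <= ck w1) && (ck w1 <= ck w2) && (ck w2 <= ck w3) && (ck w3 <= ck w4),
   cp w2 ==> (cb0 w2 || cb1 w2 || cb0 w1 || cb0 w3) && (cb0 w2 || cb1 w2 || cb1 w1 || cb1 w3),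
   [&& cp w1, cp w3, ~~ cb0 w1 & ~~ cb0 w3] ==> [|| cb0 w0, cb1 w1, cb0 w4 | cb1 w3],
   [&& cp w1, cp w3, ~~ cb1 w1 & ~~ cb1 w3] ==> [|| cb1 w0, cb0 w1, cb1 w4 | cb0 w3],
   [&& cp w1, cp w2, ~~ cb0 w1 & ~~ cb1 w2] ==> (cb0 w0 || cb1 w3) &
   [&& cp w1, cp w2, ~~ cb1 w1 & ~~ cb0 w2] ==> (cb1 w0 || cb0 w3)].
Definition tbl : seq nat := [:: 6; 6; 3; 7; 7; 11; 30; 6; 30; 30; 30; 30; 30; 3; 0; 4; 4; 8; 30; 7; 4; 8; 8; 12; 30; 7; 4; 8; 8; 12; 30; 11; 8; 12; 12; 16; 30; 30; 30; 30; 30; 30; 30; 6; 30; 30; 30; 30; 30; 30; 30; 30; 30; 30; 30; 30; 30; 30; 30; 30; 30; 30; 30; 30; 30; 30; 30; 30; 30; 30; 30; 30; 30; 30; 30; 30; 30; 30; 30; 30; 30; 30; 30; 30; 30; 30; 30; 30; 30; 30; 30; 30; 30; 30; 30; 30; 30; 30; 30; 30; 30; 30; 30; 8; 5; 9; 9; 13; 30; 30; 30; 30; 30; 30; 30; 7; 30; 30; 30; 30; 30; 4; 1; 5; 5; 9; 30; 8; 5; 9; 9; 13; 30; 8; 5; 9; 9; 13; 30; 12; 9; 13; 13; 17; 30; 30; 30; 30; 30; 30; 30; 7; 30; 30; 30; 30; 30; 4; 1; 5; 5; 9; 30; 8; 5; 9; 9; 13; 30; 8; 5; 9; 9; 13;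 30; 12; 9; 13; 13; 17; 30; 30; 30; 30; 30; 30; 30; 11; 30; 30; 30; 30; 30; 8; 5; 9; 9; 13; 30; 12; 9; 13; 13; 17; 30; 12; 9; 13; 13; 17; 30; 16; 13; 17; 17; 21; 30; 30; 30; 30; 30; 30; 30; 30; 30; 30; 30; 30; 30; 30; 30; 30; 30; 30; 30; 30; 30; 30; 30; 30; 30; 30; 30; 30; 30; 30; 30; 30; 30; 30; 30; 30; 30; 30; 30; 30; 30; 30; 30; 6; 30; 30; 30; 30; 30; 30; 30; 30; 30; 30; 30; 30; 30; 30; 30; 30; 30; 30; 30; 30; 30; 30; 30; 30; 30; 30; 30; 30; 30; 30; 30; 30; 30; 30; 30; 30; 30; 30; 30; 30; 30; 30; 30; 30; 30; 30; 30; 30; 30; 30; 30; 30; 30; 30; 30; 30; 30; 30; 30; 30; 30; 30; 30; 30; 30; 30; 30; 30; 30; 30; 30; 30; 30; 30; 30; 30; 30; 30; 30; 30; 30; 30; 30; 30; 30; 30; 30; 30; 30; 30; 30; 30; 30; 30; 30; 30; 30; 30; 30; 30; 30; 30; 30; 30; 30; 30; 30; 30; 30; 30; 30; 30; 30; 30; 30; 30; 30; 30; 30; 30; 30; 30; 30; 30; 30; 30; 30; 30; 30; 30; 30; 30; 30; 30; 30; 30; 30; 30; 30; 30; 30; 30; 30; 30; 30; 30; 30; 30; 30; 30; 30; 30; 30; 30; 30; 30; 30; 30; 30; 30; 30; 30; 30; 30; 30; 30; 30; 30; 30; 30; 30; 30; 30; 30; 30; 30; 30; 30; 30; 30; 30;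 30; 30; 30; 30; 30; 30; 30; 30; 30; 30; 30; 30; 30; 30; 30; 30; 30; 30; 30; 30; 30; 30; 30; 30; 30; 30; 30; 30; 30; 30; 30; 30; 30; 30; 7; 30; 30; 30; 30; 30; 30; 30; 30; 30; 30; 30; 30; 30; 30; 30; 30; 30; 30; 30; 30; 30; 30; 30; 30; 30; 30; 30; 30; 30; 30; 30; 30; 30; 30; 30; 30; 30; 30; 30; 30; 30; 30; 30; 30; 30; 30; 30; 30; 30; 30; 30; 30; 30; 30; 30; 30; 30; 30; 30; 9; 6; 10; 10; 14; 30; 30; 30; 30; 30; 30; 30; 7; 30; 30; 30; 30; 30; 4; 1; 5; 5; 9; 30; 8; 5; 9; 9; 13; 30; 8; 5; 9; 9; 13; 30; 12; 9; 13; 13; 17; 30; 30; 30; 30; 30; 30; 30; 7; 30; 30; 30; 30; 30; 4; 1; 5; 5; 9; 30; 8; 5; 9; 9; 13; 30; 8; 5; 9; 9; 13; 30; 12; 9; 13; 13; 17; 30; 30; 30; 30; 30; 30; 30; 8; 30; 30; 30; 30; 30; 7; 4; 7; 7; 10; 30; 9; 6; 10; 10; 14; 30; 9; 6; 10; 10; 14; 30; 13; 10; 14; 14; 18; 30; 30; 30; 30; 30; 30; 30; 30; 30; 30; 30; 30; 30; 30; 30; 30; 30; 30; 30; 30; 30; 30; 30; 30; 30; 30; 30; 30; 30; 30; 30; 30; 30; 30; 30; 30; 30; 30; 30; 30; 30; 30; 30; 7; 30; 30; 30; 30; 30; 30; 30; 30; 30; 30; 30; 30; 30; 30; 30; 30;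 30; 30; 30; 30; 30; 30; 30; 30; 30; 30; 30; 30; 30; 30; 30; 30; 30; 30; 30; 30; 30; 30; 30; 30; 30; 30; 30; 30; 30; 30; 30; 30; 30; 30; 30; 30; 30; 7; 4; 8; 8; 12; 30; 9; 6; 10; 10; 14; 30; 30; 30; 30; 30; 30; 30; 8; 30; 30; 30; 30; 30; 5; 2; 6; 6; 10; 30; 9; 6; 10; 10; 14; 30; 9; 6; 10; 10; 14; 30; 13; 10; 14; 14; 18; 30; 30; 30; 30; 30; 30; 30; 9; 30; 30; 30; 30; 30; 6; 3; 7; 7; 11; 30; 9; 6; 10; 10; 14; 30; 10; 7; 11; 11; 15; 30; 13; 10; 14; 14; 18; 30; 30; 30; 30; 30; 30; 30; 12; 30; 30; 30; 30; 30; 9; 6; 10; 10; 14; 30; 13; 10; 14; 14; 18; 30; 13; 10; 14; 14; 18; 30; 17; 14; 18; 18; 22; 30; 30; 30; 30; 30; 30; 30; 30; 30; 30; 30; 30; 30; 30; 30; 30; 30; 30; 30; 30; 30; 30; 30; 30; 30; 30; 30; 30; 30; 30; 30; 30; 30; 30; 30; 30; 30; 30; 30; 30; 30; 30; 30; 7; 30; 30; 30; 30; 30; 30; 30; 30; 30; 30; 30; 30; 30; 30; 30; 30; 30; 30; 30; 30; 30; 30; 30; 30; 30; 30; 30; 30; 30; 30; 30; 30; 30; 30; 30; 30; 30; 30; 30; 30; 30; 30; 30; 30; 30; 30; 30; 7; 4; 8; 8; 12; 30; 30; 30; 30; 30; 30; 30; 9; 6; 10; 10; 14; 30; 30; 30;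 30; 30; 30; 30; 9; 30; 30; 30; 30; 30; 6; 3; 7; 7; 11; 30; 10; 7; 11; 11; 15; 30; 9; 6; 10; 10; 14; 30; 13; 10; 14; 14; 18; 30; 30; 30; 30; 30; 30; 30; 8; 30; 30; 30; 30; 30; 5; 2; 6; 6; 10; 30; 9; 6; 10; 10; 14; 30; 9; 6; 10; 10; 14; 30; 13; 10; 14; 14; 18; 30; 30; 30; 30; 30; 30; 30; 12; 30; 30; 30; 30; 30; 9; 6; 10; 10; 14; 30; 13; 10; 14; 14; 18; 30; 13; 10; 14; 14; 18; 30; 17; 14; 18; 18; 22; 30; 30; 30; 30; 30; 30; 30; 30; 30; 30; 30; 30; 30; 30; 30; 30; 30; 30; 30; 30; 30; 30; 30; 30; 30; 30; 30; 30; 30; 30; 30; 30; 30; 30; 30; 30; 30; 30; 30; 30; 30; 30; 30; 8; 30; 30; 30; 30; 30; 30; 30; 30; 30; 30; 30; 30; 30; 30; 30; 30; 30; 30; 30; 30; 30; 30; 30; 30; 30; 30; 30; 30; 30; 30; 30; 30; 30; 30; 30; 7; 30; 30; 30; 30; 30; 4; 1; 5; 5; 9; 30; 7; 4; 8; 8; 12; 30; 7; 4; 8; 8; 12; 30; 10; 7; 11; 11; 15; 30; 30; 30; 30; 30; 30; 30; 9; 30; 30; 30; 30; 30; 6; 3; 7; 7; 11; 30; 10; 7; 11; 11; 15; 30; 10; 7; 11; 11; 15; 30; 14; 11; 15; 15; 19; 30; 30; 30; 30; 30; 30; 30; 9; 30; 30; 30; 30; 30; 6; 3; 7; 7; 11;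 30; 10; 7; 11; 11; 15; 30; 10; 7; 11; 11; 15; 30; 14; 11; 15; 15; 19; 30; 30; 30; 30; 30; 30; 30; 13; 30; 30; 30; 30; 30; 10; 7; 11; 11; 15; 30; 14; 11; 15; 15; 19; 30; 14; 11; 15; 15; 19; 30; 18; 15; 19; 19; 23].
Definition psi a b c d := nth 30 tbl (a*216+b*36+c*6+d).
Definition stepok a b c d x : bool :=
    (psi a b c d < 30) ==> Lw a b c d x ==>
    (psi b c d x < 30) && (psi b c d x + 3 * cp x <= psi a b c d + 4 * (cb0 x + cb1 x)).
Definition checkall : bool :=
  all (fun a => all (fun b => all (fun c => all (fun d => all (fun x => stepok a b c d x)
   (iota 0 6)) (iota 0 6)) (iota 0 6)) (iota 0 6)) (iota 0 6).
Lemma checkallT : checkall = true. Proof. vm_compute. reflexivity. Qed.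

Lemma step a b c d x : a < 6 -> b < 6 -> c < 6 -> d < 6 -> x < 6 -> stepok a b c d x.
Proof.
move=> ha hb hc hd hx.
have ia : a \in iota 0 6 by rewrite mem_iota.
have ib : b \in iota 0 6 by rewrite mem_iota.
have ic : c \in iota 0 6 by rewrite mem_iota.
have id : d \in iota 0 6 by rewrite mem_iota.
have ix : x \in iota 0 6 by rewrite mem_iota.
have := checkallT; rewrite /checkall.
move=> /allP /(_ a ia) /allP /(_ b ib) /allP /(_ c ic) /allP /(_ d id).
by move=> /allP /(_ x ix).
Qed.

Section Graph.
Variable n : nat.
Variable C : {set 'I_2 * 'I_n}.

Definition bitP (r p : nat) : bool :=
  [exists v : 'I_2 * 'I_n, [&& v \in C, v.1 == r :> nat & v.2 + 4 == p]].

Definition pres p := (4 <= p) && (p < n + 4).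

Lemma bitP_range r p : bitP r p -> pres p.
Proof.
case/existsP => [[a b]] /and3P [_ _ /eqP <-] /=. have := ltn_ord b. rewrite /pres. lia.
Qed.

Lemma bitP_row r p : bitP r p -> r < 2.
Proof.
case/existsP => v /and3P [_ /eqP <- _]. exact: ltn_ord.
Qed.

Lemma memb v : (v \in C) = bitP v.1 (v.2 + 4).
Proof.
apply/idP/existsP.
  by move=> h; exists v; rewrite h !eqxx.
case=> w /and3P [wC /eqP e1 /eqP e2].
have -> : v = w; last done.
case: v w e1 e2 {wC} => [a b] [c d] /= e1 e2.
have -> : a = c by apply: val_inj.
have -> : b = d by apply: val_inj => /=; lia.
done.
Qed.

Definition g p := if p < 4 then 0 else if p < n + 4 then 2 + bitP 0 p + 2 * bitP 1 p else 1.

Lemma g_lt6 p : g p < 6.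
Proof. rewrite /g; case: ifP => //; case: ifP => //; case: (bitP 0 p); case: (bitP 1 p) => //. Qed.

Lemma cb0_g p : cb0 (g p) = bitP 0 p.
Proof.
rewrite /g; case: ifP => h1; [|case: ifP => h2].
- by apply/esym/negbTE/negP => /bitP_range; rewrite /pres; lia.
- by case: (bitP 0 p); case: (bitP 1 p).
- by apply/esym/negbTE/negP => /bitP_range; rewrite /pres; lia.
Qed.

Lemma cb1_g p : cb1 (g p) = bitP 1 p.
Proof.
rewrite /g; case: ifP => h1; [|case: ifP => h2].
- by apply/esym/negbTE/negP => /bitP_range; rewrite /pres; lia.
- by case: (bitP 0 p); case: (bitP 1 p).
- by apply/esym/negbTE/negP => /bitP_range; rewrite /pres; lia.
Qed.

Lemma cp_g p : cp (g p) = pres p.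
Proof.
rewrite /g /pres /cp; case: ifP => h1; [|case: ifP => h2].
- lia.
- by case: (bitP 0 p); case: (bitP 1 p); lia.
- lia.
Qed.

Lemma ck_g p : ck (g p) = (4 <= p) + (n + 4 <= p).
Proof.
rewrite /g; case: ifP => h1; [|case: ifP => h2].
- have -> : (4 <= p) = false by apply/negbTE; lia.
  have -> : (n + 4 <= p) = false by apply/negbTE; lia. done.
- have -> : (4 <= p) = true by apply/idP; lia.
  have -> : (n + 4 <= p) = false by apply/negbTE; lia.
  by case: (bitP 0 p); case: (bitP 1 p).
- have -> : (4 <= p) = true by apply/idP; lia.
  have -> : (n + 4 <= p) = true by apply/idP; lia. done.
Qed.

End Graph.

Lemma nbrE n (a c : 'I_2) (b d : 'I_n) : ((c, d) == (a, b)) || P2Pn_adj n (a, b) (c, d) =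
  [|| (c == a :> nat) && (d == b :> nat),
      (a == c :> nat) && ((b.+1 == d :> nat) || (d.+1 == b :> nat)) |
      ((a.+1 == c :> nat) || (c.+1 == a :> nat)) && (b == d :> nat)].
Proof. by []. Qed.

Lemma bitP_eq n (C : {set 'I_2 * 'I_n}) x y a b : bitP C x y -> x = a -> y = b -> bitP C a b.
Proof. by move=> h <- <-. Qed.

Ltac kill E := match type of E with is_true (bitP _ ?x ?y) =>
  match goal with H : bitP _ ?a ?b = false |- _ =>
    let e1 := fresh "e" in let e2 := fresh "e" in
    (have e1 : x = a by clear - E; lia); (have e2 : y = b by clear - E; lia);
    have := bitP_eq E e1 e2; by rewrite H end end.

Ltac finish E H := first [kill E | clear - H; lia].

Section Sem.
Variable n : nat.
Variable C : {set 'I_2 * 'I_n}.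
Hypothesis hl : is_locdom (P2Pn_adj n) C.

Lemma domL r i : r < 2 -> i < n ->
  bitP C 0 (i+4) || bitP C 1 (i+4) || bitP C r (i+3) || bitP C r (i+5).
Proof.
move=> hr hi; apply/negPn/negP; rewrite !negb_or.
move=> /andP[/andP[/andP[/negbTE m0 /negbTE m1] /negbTE m2] /negbTE m3].
have mr : bitP C r (i+4) = false by move: hr; case: (r) => [|[|]].
pose u : 'I_2 * 'I_n := (Ordinal hr, Ordinal hi).
have uC : u \notin C by rewrite memb /= mr.
move: hl => /andP [/forallP /(_ u) /implyP /(_ uC) /set0Pn [[c d]]].
rewrite !inE => /andP [H wC] _.
have E := wC; rewrite memb /= in E.
rewrite /u nbrE /= in H.
move: (nat_of_ord c) (nat_of_ord d) (ltn_ord c) E H => cc D hc E H.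
clear uC u wC.
(have [er|er] : r = 0 \/ r = 1 by lia); subst r;
(have [e|e] : cc = 0 \/ cc = 1 by lia); subst cc;
(have : i = D + 1 \/ D = i \/ D = i + 1 by lia);
case=> [ed|[ed|ed]]; subst; finish E H.
Qed.

Lemma sepL (u v : 'I_2 * 'I_n) : u \notin C -> v \notin C -> u != v ->
  (forall c d, (c, d) \in C -> bitP C c (d + 4) ->
     ((c, d) == u) || P2Pn_adj n u (c, d) = ((c, d) == v) || P2Pn_adj n v (c, d)) -> False.
Proof.
move=> uC vC uv hx.
move: hl => /andP [_ /forallP /(_ u) /forallP /(_ v)]; rewrite uC vC uv /= => /negP; apply.
apply/eqP/setP => -[c d]; rewrite !inE.
case wC : ((c, d) \in C); rewrite ?andbF ?andbT //.
apply: hx => //; by move: wC; rewrite memb.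
Qed.

Lemma s1L r i : r < 2 -> i + 2 < n -> ~~ bitP C r (i+4) -> ~~ bitP C r (i+6) ->
  [|| bitP C r (i+3), bitP C (1-r) (i+4), bitP C r (i+7) | bitP C (1-r) (i+6)].
Proof.
move=> hr hi /negbTE n1 /negbTE n3; apply/negPn/negP; rewrite !negb_or.
move=> /and4P [/negbTE m0 /negbTE m1 /negbTE m4 /negbTE m3].
have hi1 : i < n by lia.
pose u : 'I_2 * 'I_n := (Ordinal hr, Ordinal hi1).
pose v : 'I_2 * 'I_n := (Ordinal hr, Ordinal hi).
apply: (@sepL u v).
- by rewrite memb /= n1.
- by rewrite memb /= (_ : i + 2 + 4 = i + 6) ?n3 //; lia.
- apply/eqP => e; have := congr1 (fun x => nat_of_ord x.2) e; rewrite /=; lia.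
move=> c d _ E; rewrite /u /v !nbrE /=.
move: (nat_of_ord c) (nat_of_ord d) (ltn_ord c) E => cc D hc E.
clear u v.
apply/idP/idP => H;
(have [er|er] : r = 0 \/ r = 1 by lia); subst r;
(have [e|e] : cc = 0 \/ cc = 1 by lia); subst cc;
(have : i = D + 1 \/ D = i \/ D = i + 1 \/ D = i + 2 \/ D = i + 3 by lia);
case=> [ed|[ed|[ed|[ed|ed]]]]; subst; finish E H.
Qed.

Lemma s2L r i : r < 2 -> i + 1 < n -> ~~ bitP C r (i+4) -> ~~ bitP C (1-r) (i+5) ->
  bitP C r (i+3) || bitP C (1-r) (i+6).
Proof.
move=> hr hi /negbTE n1 /negbTE n2; apply/negPn/negP; rewrite !negb_or.
move=> /andP [/negbTE m0 /negbTE m3].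
have hi1 : i < n by lia.
have hs : 1 - r < 2 by lia.
pose u : 'I_2 * 'I_n := (Ordinal hr, Ordinal hi1).
pose v : 'I_2 * 'I_n := (Ordinal hs, Ordinal hi).
apply: (@sepL u v).
- by rewrite memb /= n1.
- by rewrite memb /= (_ : i + 1 + 4 = i + 5) ?n2 //; lia.
- apply/eqP => e; have := congr1 (fun x => nat_of_ord x.2) e; rewrite /=; lia.
move=> c d _ E; rewrite /u /v !nbrE /=.
move: (nat_of_ord c) (nat_of_ord d) (ltn_ord c) E => cc D hc E.
clear u v.
apply/idP/idP => H;
(have [er|er] : r = 0 \/ r = 1 by lia); subst r;
(have [e|e] : cc = 0 \/ cc = 1 by lia); subst cc;
(have : i = D + 1 \/ D = i \/ D = i + 1 \/ D = i + 2 by lia);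
case=> [ed|[ed|[ed|ed]]]; subst; finish E H.
Qed.

End Sem.

Section Main.
Variable n : nat.
Variable C : {set 'I_2 * 'I_n}.
Hypothesis hl : is_locdom (P2Pn_adj n) C.

Lemma windowL j : Lw (g C j) (g C (j+1)) (g C (j+2)) (g C (j+3)) (g C (j+4)).
Proof.
rewrite /Lw !cb0_g !cb1_g !cp_g !ck_g.
apply/andP; split; first lia.
apply/andP; split.
  apply/implyP; rewrite /pres => p.
  have [i ei] : exists i, j = i + 2 by exists (j - 2); lia.
  subst j; rewrite -!addnA in p *.
  have hi : i < n by lia.
  apply/andP; split; [exact: (domL hl (isT : 0 < 2) hi) | exact: (domL hl (isT : 1 < 2) hi)].
apply/andP; split.
  apply/implyP => /and4P [p1 p3 q1 q3]; move: p1 p3; rewrite /pres => p1 p3.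
  have [i ei] : exists i, j = i + 3 by exists (j - 3); lia.
  subst j; rewrite -!addnA in p1 p3 q1 q3 *.
  have hi : i + 2 < n by lia.
  exact: (s1L hl (isT : 0 < 2) hi q1 q3).
apply/andP; split.
  apply/implyP => /and4P [p1 p3 q1 q3]; move: p1 p3; rewrite /pres => p1 p3.
  have [i ei] : exists i, j = i + 3 by exists (j - 3); lia.
  subst j; rewrite -!addnA in p1 p3 q1 q3 *.
  have hi : i + 2 < n by lia.
  exact: (s1L hl (isT : 1 < 2) hi q1 q3).
apply/andP; split.
  apply/implyP => /and4P [p1 p2 q1 q2]; move: p1 p2; rewrite /pres => p1 p2.
  have [i ei] : exists i, j = i + 3 by exists (j - 3); lia.
  subst j; rewrite -!addnA in p1 p2 q1 q2 *.
  have hi : i + 1 < n by lia.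
  exact: (s2L hl (isT : 0 < 2) hi q1 q2).
apply/implyP => /and4P [p1 p2 q1 q2]; move: p1 p2; rewrite /pres => p1 p2.
  have [i ei] : exists i, j = i + 3 by exists (j - 3); lia.
  subst j; rewrite -!addnA in p1 p2 q1 q2 *.
  have hi : i + 1 < n by lia.
  exact: (s2L hl (isT : 1 < 2) hi q1 q2).
Qed.

End Main.

Section Count.
Variable n : nat.
Variable C : {set 'I_2 * 'I_n}.

Definition bs k := \sum_(p < k) (bitP C 0 p + bitP C 1 p).

Lemma bitP_out r p : ~~ pres n p -> bitP C r p = false.
Proof. by move=> h; apply/negbTE/negP => /bitP_range; apply/negP. Qed.

Lemma cardC : #|C| = bs (n + 8).
Proof.
rewrite /bs -(big_mkord xpredT (fun p => bitP C 0 p + bitP C 1 p)).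
rewrite (@big_cat_nat _ _ _ 4) //; last lia.
rewrite (@big_cat_nat _ _ _ (n + 4) 4) //=; try lia.
rewrite [\sum_(0 <= i < 4) _]big1_seq; last first.
  move=> p /andP [_]; rewrite mem_index_iota => hp; rewrite !bitP_out //; rewrite /pres; lia.
rewrite [\sum_(n + 4 <= i < n + 8) _]big1_seq; last first.
  move=> p /andP [_]; rewrite mem_index_iota => hp; rewrite !bitP_out //; rewrite /pres; lia.
rewrite add0n addn0 (big_addn 0 (n + 4) 4) (_ : n + 4 - 4 = n); last lia.
rewrite big_mkord -sum1_card big_mkcond /=.
have -> : \sum_(x : 'I_2 * 'I_n) (if x \in C then 1 else 0) =
   \sum_(a < 2) \sum_(b < n) (if (a, b) \in C then 1 else 0).
  by rewrite pair_big; apply: eq_bigr => -[a b].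
rewrite big_ord_recl big_ord_recl big_ord0 addn0 -big_split /=.
apply: eq_bigr => b _; rewrite !memb /=.
by case: (bitP C 0 (b + 4)); case: (bitP C 1 (b + 4)).
Qed.

Lemma gA p : n + 4 <= p -> g C p = 1.
Proof. move=> h; rewrite /g; case: ifP => h1; first lia. case: ifP => h2 //; lia. Qed.

Lemma g0 p : p < 4 -> g C p = 0.
Proof. by move=> h; rewrite /g h. Qed.

Hypothesis hl : is_locdom (P2Pn_adj n) C.

Lemma inv k : psi (g C k) (g C (k+1)) (g C (k+2)) (g C (k+3)) < 30 /\
   psi (g C k) (g C (k+1)) (g C (k+2)) (g C (k+3)) + 3 * minn k n <= 6 + 4 * bs (k+4).
Proof.
elim: k => [|k [IH1 IH2]].
  rewrite !g0 // /bs big1 => [|p _]; last by move: (ltn_ord p) => hp; rewrite !bitP_out //; rewrite /pres; lia.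
  rewrite (_ : psi 0 0 0 0 = 6) //; lia.
have st := step (g_lt6 C k) (g_lt6 C (k+1)) (g_lt6 C (k+2)) (g_lt6 C (k+3)) (g_lt6 C (k+4)).
have W := windowL hl k.
move: st; rewrite /stepok IH1 W /= => /andP [h1 h2].
rewrite !cp_g !cb0_g !cb1_g in h2.
have -> : k.+1 + 1 = k + 2 by lia.
have -> : k.+1 + 2 = k + 3 by lia.
have -> : k.+1 + 3 = k + 4 by lia.
have -> : k.+1 = k + 1 by lia.
split; first exact: h1.
rewrite /bs (_ : k + 1 + 4 = (k + 4).+1); last lia.
rewrite big_ord_recr /= -/(bs (k + 4)).
move: h2; rewrite /pres.
case: (ltnP k n) => hk.
  have -> : minn (k + 1) n = minn k n + 1 by lia.
  have -> : (4 <= k + 4) && (k + 4 < n + 4) by lia.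
  move=> h2 /=; lia.
have -> : minn (k + 1) n = minn k n by lia.
have -> : (4 <= k + 4) && (k + 4 < n + 4) = false by apply/negbTE; lia.
move=> h2 /=; lia.
Qed.

Lemma mainC : 3 * n <= 4 * #|C|.
Proof.
have [_ h] := inv (n + 4).
rewrite !gA in h; try lia.
rewrite (_ : psi 1 1 1 1 = 6) // in h.
rewrite cardC (_ : n + 8 = n + 4 + 4); last lia.
have : minn (n + 4) n = n by lia.
lia.
Qed.

End Count.

Theorem lemma4p6 (n : nat) (hn : 2 <= n) :
  (3 * n + 2) %/ 4 <= LD (P2Pn_adj n).
Proof.
rewrite /LD; apply: (big_ind (fun x => (3 * n + 2) %/ 4 <= x)).
- rewrite card_prod !card_ord; lia.
- by move=> x y hx hy; rewrite leq_min hx hy.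
- move=> C hC; have h : 3 * n <= 4 * #|C| := mainC hC.
  lia.
Qed.
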